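(* Let $\mathbf a=(a_1,\dots,a_m)$ be an admissible sequence and suppose there is $k$ with $1\le k<m$ and $a_k\le 2k$. Put $\mathbf a'=(a_1,\dots,a_k)$ and $\mathbf a''=(a_{k+1}-2k,\dots,a_m-2k)$. Then $\mathbf a'$ and $\mathbf a''$ are admissible, and for every nonnegative integer $x$, $$\det\mathbf m(\mathbf a,x)=\det\mathbf m(\mathbf a',x)\cdot\det\mathbf m(\mathbf a'',x+k).$$
   Context: $q$ is an indeterminate; $(a;q)_n=\prod_{j=0}^{n-1}(1-aq^j)$ for $n\ge0$. A finite sequence of integers $\mathbf a=(a_1,\dots,a_m)$ is admissible if it is strictly increasing and $2i-1\le a_i\le 2m$ for all $1\le i\le m$. For a sequence $\mathbf a$ of length $m$ and a nonnegative integer $x$, $\mathbf m(\mathbf a,x)$ is the $m\times m$ matrix with $(i,j)$-entry $\frac{(q^{2i+2x};q^2)_{a_j+1-2i}}{(q;q)_{a_j+1-2i}}$ if $a_j+1-2i\ge 0$ and $0$ otherwise. *)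

(* Defs.v *)
From mathcomp Require Import all_boot all_order all_algebra.
Set Implicit Arguments. Unset Strict Implicit. Unset Printing Implicit Defensive.
Import Order.TTheory GRing.Theory Num.Theory.
Local Open Scope ring_scope.

Definition RF := {fraction {poly rat}}.
Definition q : RF := tofrac 'X.

Definition qpoch (a b : RF) (n : nat) : RF := \prod_(j < n) (1 - a * b ^+ j).

(* Admissible: strictly increasing and 2i-1 <= a_i <= 2m (1-indexed i),
   i.e. with 0-indexed i: 2i+1 <= a`_i <= 2m. *)
Definition admissible (a : seq int) : Prop :=
  sorted (fun x y : int => x < y) a /\
  forall i : nat, (i < size a)%N ->
    (2 * i%:Z + 1 <= nth 0 a i) /\ (nth 0 a i <= 2 * (size a)%:Z).

(* m(a,x): (i,j)-entry (1-indexed) (q^{2i+2x};q^2)_{a_j+1-2i} / (q;q)_{a_j+1-2i}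
   if a_j+1-2i >= 0, else 0.  With 0-indexed i', j': i = i'+1. *)
Definition mmat (a : seq int) (x : nat) : 'M[RF]_(size a) :=
  \matrix_(i < size a, j < size a)
    let e : int := nth 0 a j + 1 - 2 * (i.+1)%:Z in
    if (0 <= e) then
      qpoch (q ^+ (2 * i.+1 + 2 * x)) (q ^+ 2) `|e|%N / qpoch q q `|e|%N
    else 0.

(* Main.v *)
Require Import Defs.
From mathcomp Require Import all_boot all_order all_algebra.
From mathcomp Require Import zify ring.
Import Order.TTheory GRing.Theory Num.Theory.
Local Open Scope ring_scope.

Lemma det_eq_cast (n m : nat) (e : n = m) (A : 'M[RF]_n) (B : 'M[RF]_m) :
  (forall i j, A i j = B (cast_ord e i) (cast_ord e j)) -> \det A = \det B.
Proof.
subst m => H; congr (\det _); apply/matrixP => i j; by rewrite H !cast_ord_id.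
Qed.

Theorem mainTheorem5 (a : seq int) (k : nat) :
  admissible a -> (1 <= k)%N -> (k < size a)%N -> nth 0 a k.-1 <= 2 * k%:Z ->
  let a' := take k a in
  let a'' := [seq y - 2 * k%:Z | y <- drop k a] in
  admissible a' /\ admissible a'' /\
  forall x : nat,
    \det (mmat a x) = \det (mmat a' x) * \det (mmat a'' (x + k)).
Proof.
move=> [srt adm] k1 km hk a' a''.
have tr : transitive (fun x y : int => x < y) by move=> ? ? ? ?; apply: lt_trans.
have le_ak : forall j, (j < k)%N -> nth 0 a j <= 2 * k%:Z.
  move=> j jk; apply: le_trans hk.
  case: (ltnP j k.-1) => hj; last by have -> : j = k.-1 by lia.
  apply/ltW/(sorted_ltn_nth tr 0 srt) => //; rewrite inE; lia.
have sza' : size a' = k by rewrite size_take km.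
have sza'' : size a'' = (size a - k)%N by rewrite size_map size_drop.
split.
  split; first exact: take_sorted.
  move=> i; rewrite sza' => ik; rewrite nth_take //.
  have [h1 _] := adm i ltac:(lia); split => //; exact: le_ak.
split.
  split.
    rewrite sorted_map; apply: drop_sorted.
    by apply: sub_sorted srt => u v /=; rewrite ltrBlDr subrK.
  move=> i; rewrite sza'' => ik.
  rewrite (nth_map 0) ?size_drop // nth_drop.
  have [h1 h2] := adm (k + i)%N ltac:(lia).
  split; rewrite ?lerBrDr; [move: h1|move: h2]; move: (nth 0 a (k+i)) => v.
    by rewrite PoszD; lia.
  by rewrite -subzn ?(ltnW km) //; lia.
move=> x.
set n := size a.
have hn : n = (k + (n - k))%N by lia.
set M := castmx (hn, hn) (mmat a x).
have -> : \det (mmat a x) = \det M.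
  apply: (@det_eq_cast _ _ hn) => i j; rewrite /M castmxE /=.
  by rewrite !cast_ordK.
have dl : dlsubmx M = 0.
  apply/matrixP => i j; rewrite !mxE castmxE /= mxE /=.
  case: ifP => // h; exfalso; move: h; apply/negP; rewrite -ltNge.
  have := le_ak j (ltn_ord j); move: (nth 0 a j) => v; lia.
rewrite -(submxK M) dl det_ublock; congr (_ * _).
  apply: det_eq_cast (esym sza') _ _ _ => i j.
  rewrite !mxE castmxE /= mxE /= /a' nth_take //.
apply: det_eq_cast (esym sza'') _ _ _ => i j.
rewrite !mxE castmxE /= mxE /=.
rewrite (nth_map 0) ?size_drop // nth_drop.
have -> : (nth 0 a (k + j) + 1 - 2 * (k + i).+1%:Z) = (nth 0 a (k + j) - 2 * k%:Z + 1 - 2 * i.+1%:Z).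
  move: (nth 0 a (k + j)) => v; lia.
by have -> : (2 * (k + i).+1 + 2 * x = 2 * i.+1 + 2 * (x + k))%N by lia.
Qed.
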